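(* Let $T$ be a complete dependent (NIP) first-order theory with monster model $\mathfrak{C}$, $\zeta$ an ordinal, $n_* <\omega$, and for $n<n_*$ let $\varphi_n(\bar x_{[\zeta]},\bar y_n)$ be a formula. Let $\mathcal{D}$ be a proper filter on a set $I$ and $\bar a_t \in {}^\zeta\mathfrak{C}$ for $t\in I$. Then there are $k_*<\omega$ and a partition $\langle \mathcal{S}_k : k<k_*\rangle$ of $I$ such that: (a) $\mathcal{S}_k \in \mathcal{D}^+$ for each $k<k_*$; (b) for every $\ell<n_*$ and every $\bar b \in {}^{\ell g(\bar y_\ell)}\mathfrak{C}$ there are $k<k_*$ and a truth value $\mathbf t$ such that $\{t\in\mathcal{S}_k : \mathfrak{C}\models \varphi_\ell[\bar a_t,\bar b]^{\mathbf t}\} = \mathcal{S}_k \bmod \mathcal{D}$.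
   Context: $\bar x_{[\zeta]} = \langle x_i : i<\zeta\rangle$ (a formula uses only finitely many of these variables). $\mathcal{D}^+$ is the set of subsets of $I$ meeting every member of $\mathcal{D}$. For $X, Y \subseteq I$, ''$X = Y \bmod \mathcal{D}$'' means the symmetric difference of $X$ and $Y$ is disjoint from some member of $\mathcal{D}$. $\varphi^{\mathbf t}$ is $\varphi$ if $\mathbf t$ is true and $\neg\varphi$ otherwise. *)

(* Defs.v *)
From mathcomp Require Import all_boot.
Set Implicit Arguments. Unset Strict Implicit. Unset Printing Implicit Defensive.

Record signature := Signature {
  func : Type; farity : func -> nat;
  rel : Type; rarity : rel -> nat }.

Inductive term (L : signature) (V : Type) : Type :=
| tvar : V -> term L V
| tapp : forall f : func L, ('I_(farity f) -> term L V) -> term L V.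

(** Formulas with free variables in [V]; [fex] binds a fresh variable
    ([None]) and the old variables become [Some v]. *)
Inductive formula (L : signature) : Type -> Type :=
| feq : forall V, term L V -> term L V -> formula L V
| frel : forall V (r : rel L), ('I_(rarity r) -> term L V) -> formula L V
| fneg : forall V, formula L V -> formula L V
| fand : forall V, formula L V -> formula L V -> formula L V
| fex : forall V, formula L (option V) -> formula L V.

Record structure (L : signature) := Structure {
  dom :> Type;
  funi : forall f : func L, ('I_(farity f) -> dom) -> dom;
  reli : forall r : rel L, ('I_(rarity r) -> dom) -> Prop }.

Fixpoint teval (L : signature) (M : structure L) (V : Type) (e : V -> M)
  (t : term L V) : M :=
  match t with
  | tvar v => e v
  | tapp f args => funi (fun i => teval e (args i))
  end.

Definition extend (M : Type) (V : Type) (e : V -> M) (m : M) : option V -> M :=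
  fun o => match o with Some v => e v | None => m end.

Fixpoint sat (L : signature) (M : structure L) (V : Type) (phi : formula L V)
  : (V -> M) -> Prop :=
  match phi in formula _ V0 return (V0 -> M) -> Prop with
  | feq _ t1 t2 => fun e => teval e t1 = teval e t2
  | frel _ r args => fun e => reli (fun i => teval e (args i))
  | fneg _ p => fun e => ~ sat p e
  | fand _ p q => fun e => sat p e /\ sat q e
  | fex _ p => fun e => exists m : M, sat p (extend e m)
  end.

Definition join (M A B : Type) (a : A -> M) (b : B -> M) : A + B -> M :=
  fun s => match s with inl x => a x | inr y => b y end.

(** The partitioned formula phi(x;y) (|x| = p, |y| = q) has the independence
    property in (the complete theory of) M: for every n there are
    a_0..a_{n-1} and b_w (w ⊆ n) with  M |= phi[a_i, b_w]  iff  i ∈ w.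
    (For each n this is a first-order sentence, so it holds in M iff it
    holds in any/every model of Th(M).) *)
Definition has_IP (L : signature) (M : structure L) (p q : nat)
  (phi : formula L ('I_p + 'I_q)) : Prop :=
  forall n : nat, exists (a : 'I_n -> 'I_p -> M) (b : {set 'I_n} -> 'I_q -> M),
    forall (i : 'I_n) (w : {set 'I_n}), sat phi (join (a i) (b w)) <-> i \in w.

Definition dependent (L : signature) (M : structure L) : Prop :=
  forall (p q : nat) (phi : formula L ('I_p + 'I_q)), ~ has_IP M phi.

Definition proper_filter (I : Type) (D : (I -> Prop) -> Prop) : Prop :=
  [/\ D (fun _ => True),
      (forall X Y : I -> Prop, D X -> (forall t, X t -> Y t) -> D Y),
      (forall X Y : I -> Prop, D X -> D Y -> D (fun t => X t /\ Y t))
    & ~ D (fun _ => False)].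

Definition positive (I : Type) (D : (I -> Prop) -> Prop) (X : I -> Prop) : Prop :=
  forall Y, D Y -> exists t, X t /\ Y t.

Definition eq_mod (I : Type) (D : (I -> Prop) -> Prop) (X Y : I -> Prop) : Prop :=
  exists Z, D Z /\ forall t, Z t -> (X t <-> Y t).

Definition is_partition (I : Type) (kstar : nat) (S : 'I_kstar -> I -> Prop) : Prop :=
  (forall t, exists k, S k t) /\
  (forall k k' t, S k t -> S k' t -> k = k').

(* Main.v *)
Require Import Defs.
From mathcomp Require Import all_boot.
From Stdlib Require Import ClassicalEpsilon Classical FunctionalExtensionality List.
Set Implicit Arguments. Unset Strict Implicit. Unset Printing Implicit Defensive.

Fixpoint trename (L : signature) V W (f : V -> W) (t : term L V) : term L W :=
  match t with
  | tvar v => tvar L (f v)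
  | tapp g args => tapp (fun i => trename f (args i))
  end.

Fixpoint frename (L : signature) V (phi : formula L V) {struct phi}
  : forall W, (V -> W) -> formula L W :=
  match phi in formula _ V0 return forall W, (V0 -> W) -> formula L W with
  | feq _ t1 t2 => fun W f => feq (trename f t1) (trename f t2)
  | Defs.frel _ r args => fun W f => @Defs.frel L W r (fun i => trename f (args i))
  | fneg _ p => fun W f => fneg (frename p f)
  | fand _ p q => fun W f => fand (frename p f) (frename q f)
  | fex _ p => fun W f => fex (frename p (omap f))
  end.

Lemma tevalR (L : signature) (M : structure L) V W (f : V -> W) (e : W -> M) t :
  teval e (trename f t) = teval (fun v => e (f v)) t.
Proof.
induction t as [v|g args IH]; simpl; first by [].
f_equal; apply functional_extensionality => i; apply IH.
Qed.

Lemma satR (L : signature) (M : structure L) V (phi : formula L V) :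
  forall W (f : V -> W) (e : W -> M),
  sat (frename phi f) e <-> sat phi (fun v => e (f v)).
Proof.
induction phi; intros W f e; simpl.
- rewrite !tevalR; tauto.
- have -> : (fun i => teval e (trename f (t i))) = (fun i => teval (fun v => e (f v)) (t i)).
    by apply functional_extensionality => i; rewrite tevalR.
  tauto.
- rewrite IHphi; tauto.
- rewrite IHphi1 IHphi2; tauto.
- split=> [[m Hm]|[m Hm]]; exists m.
  + move/IHphi: Hm.
    have -> : (fun v => extend e m (omap f v)) = extend (fun v => e (f v)) m
      by apply functional_extensionality => [[v|]].
    by [].
  + apply/IHphi.
    have -> : (fun v => extend e m (omap f v)) = extend (fun v => e (f v)) m
      by apply functional_extensionality => [[v|]].
    by [].
Qed.

Fixpoint tvars (L : signature) V (t : term L V) : list V :=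
  match t with
  | tvar v => v :: nil
  | tapp g args => flat_map (fun i => tvars (args i)) (enum 'I_(farity g))
  end.

Fixpoint somes V (s : list (option V)) : list V :=
  match s with
  | nil => nil
  | Some v :: s' => v :: somes s'
  | None :: s' => somes s'
  end.

Lemma somes_in V (s : list (option V)) v : List.In (Some v) s -> List.In v (somes s).
Proof.
elim: s => [|[x|] s IH] //=.
- case=> [[->]|h]; [by left | by right; apply IH].
- case=> [//|h]; by apply IH.
Qed.

Fixpoint fv (L : signature) V (phi : formula L V) : list V :=
  match phi in formula _ V0 return list V0 with
  | feq _ t1 t2 => tvars t1 ++ tvars t2
  | Defs.frel _ r args => flat_map (fun i => tvars (args i)) (enum 'I_(rarity r))
  | fneg _ p => fv p
  | fand _ p q => fv p ++ fv q
  | fex _ p => somes (fv p)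
  end.

Lemma in_enum_In n (i : 'I_n) : List.In i (enum 'I_n).
Proof.
have : i \in enum 'I_n by rewrite mem_enum.
elim: (enum 'I_n) => [|x s IH] //=.
rewrite seq.in_cons => /orP [/eqP ->|h]; [by left | by right; apply IH].
Qed.

Lemma teval_ext (L : signature) (M : structure L) V (t : term L V) (e1 e2 : V -> M) :
  (forall v, List.In v (tvars t) -> e1 v = e2 v) -> teval e1 t = teval e2 t.
Proof.
induction t as [v|g args IH]; simpl=> H; first by apply H; left.
f_equal; apply functional_extensionality => i; apply IH => v hv; apply H.
apply/in_flat_map; exists i; split => //; apply in_enum_In.
Qed.

Lemma sat_ext (L : signature) (M : structure L) V (phi : formula L V) :
  forall (e1 e2 : V -> M),
  (forall v, List.In v (fv phi) -> e1 v = e2 v) -> (sat phi e1 <-> sat phi e2).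
Proof.
induction phi; intros e1 e2 H; simpl in *.
- rewrite (teval_ext (e1:=e1) (e2:=e2) (t:=t)); last by move=> v hv; apply H; apply in_or_app; left.
  rewrite (teval_ext (e1:=e1) (e2:=e2) (t:=t0)); last by move=> v hv; apply H; apply in_or_app; right.
  tauto.
- have -> : (fun i => teval e1 (t i)) = (fun i => teval e2 (t i)).
    apply functional_extensionality => i; apply teval_ext => v hv; apply H.
    apply/in_flat_map; exists i; split => //; apply in_enum_In.
  tauto.
- rewrite (IHphi e1 e2) //; tauto.
- rewrite (IHphi1 e1 e2); last by move=> v hv; apply H; apply in_or_app; left.
  rewrite (IHphi2 e1 e2); last by move=> v hv; apply H; apply in_or_app; right.
  tauto.
- split=> [[m Hm]|[m Hm]]; exists m; move: Hm; apply IHphi => [[v|]] hv //=;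
  [symmetry|]; apply H; by apply somes_in.
Qed.

Definition pb (P : Prop) : bool := if excluded_middle_informative P then true else false.
Lemma pbP P : pb P = true <-> P.
Proof. rewrite /pb; case: excluded_middle_informative => //. Qed.

Fixpoint cidx V (s : list V) (v : V) : nat :=
  match s with
  | nil => 0
  | y :: s' => if pb (v = y) then 0 else (cidx s' v).+1
  end.

Lemma cidx_le V (s : list V) v : cidx s v <= size s.
Proof. elim: s => [|y s IH] //=; case: pb => //. Qed.

Lemma cidx_nth V T (d : T) (h : V -> T) (s : list V) v :
  List.In v s -> seq.nth d (map h s) (cidx s v) = h v.
Proof.
elim: s => [|y s IH] //= Hin.
case E: pb => /=.
- by move/pbP: E => ->.
- apply IH; case: Hin => // Hy; subst y.
  have : pb (v = v) = true by apply/pbP.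
  by rewrite E.
Qed.
Lemma nip_bound (L : signature) (M : structure L) (hne : inhabited (dom M)) (hdep : dependent M)
  Z q (phi : formula L (Z + 'I_q)) :
  exists n, forall (b : 'I_n -> 'I_q -> M) (c : {set 'I_n} -> Z -> M),
   ~ (forall i w, sat phi (join (c w) (b i)) <-> i \in w).
Proof.
destruct hne as [m0].
pose s := fv phi.
pose f : Z + 'I_q -> 'I_q + 'I_(size s).+1 := fun v =>
  match v with inl z => inr (inord (cidx s (inl z))) | inr j => inl j end.
pose g (x : Z -> M) (v : Z + 'I_q) : M := match v with inl z => x z | inr _ => m0 end.
have H := hdep q (size s).+1 (frename phi f).
apply NNPP => Hn; apply: H; intro n.
have [b [c Hbc]] : exists (b : 'I_n -> 'I_q -> M) (c : {set 'I_n} -> Z -> M), forall i w, sat phi (join (c w) (b i)) <-> i \in w.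
  apply NNPP => K; apply Hn; exists n; intros b c Hc; apply K; exists b, c; exact Hc.
exists b, (fun w (i : 'I_(size s).+1) => seq.nth m0 (map (g (c w)) s) i).
move=> i w; rewrite satR -(Hbc i w); apply sat_ext => v hv.
case: v hv => [z|j] hv //=.
rewrite inordK; last by rewrite ltnS cidx_le.
by rewrite (cidx_nth m0 (g (c w)) hv).
Qed.
Definition cell (I Tst : Type) (tst : Tst -> I -> Prop) m (A : 'I_m -> Tst)
  (w : {set 'I_m}) : I -> Prop := fun t => forall i, i \in w <-> tst (A i) t.

Lemma pos_ext I (D : (I -> Prop) -> Prop) (X Y : I -> Prop) :
  (forall t, X t <-> Y t) -> positive D X -> positive D Y.
Proof. move=> h hX Z hZ; case: (hX Z hZ) => t [h1 h2]; exists t; split => //; exact/h. Qed.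

Lemma pos_True I (D : (I -> Prop) -> Prop) : proper_filter D -> positive D (fun _ => True).
Proof.
case=> _ hup _ hF Y hY; apply NNPP => hn; apply hF; apply: (hup _ _ hY) => t ht.
by apply hn; exists t.
Qed.

Definition good_part I (D : (I -> Prop) -> Prop) Tst (tst : Tst -> I -> Prop) :=
  exists kstar (S : 'I_kstar -> I -> Prop), is_partition S /\
    (forall k, positive D (S k)) /\
    (forall x, exists k, ~ positive D (fun t => S k t /\ tst x t) \/
                         ~ positive D (fun t => S k t /\ ~ tst x t)).

Lemma grow I (D : (I -> Prop) -> Prop) (hD : proper_filter D) Tst (tst : Tst -> I -> Prop) :
  ~ good_part D tst -> forall m, exists A : 'I_m -> Tst, forall w, positive D (cell tst A w).
Proof.
move=> Hng; elim=> [|m [A HA]].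
  have A : 'I_0 -> Tst by case=> m hm; exfalso; rewrite ltn0 in hm.
  exists A => w; apply: pos_ext (pos_True hD) => t; split=> // _ [i hi].
  by exfalso; rewrite ltn0 in hi.
pose S := fun k : 'I_#|{: {set 'I_m}}| => cell tst A (enum_val k).
have [x Hx] : exists x, forall k, positive D (fun t => S k t /\ tst x t) /\
                                  positive D (fun t => S k t /\ ~ tst x t).
  apply NNPP => Hn; apply Hng; exists _, S; split; [split|split].
  - move=> t; exists (enum_rank [set i | pb (tst (A i) t)]).
    rewrite /S /cell enum_rankK => i; rewrite inE; exact: pbP.
  - move=> k k' t hk hk'; apply: enum_val_inj; apply/setP => i.
    apply/idP/idP => h; [apply/(hk' i)/(hk i) | apply/(hk i)/(hk' i)] => //.
  - by move=> k; rewrite /S; apply: HA.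
  - move=> y; apply NNPP => hy; apply Hn; exists y => k; split; apply NNPP => hk;
    apply hy; exists k; tauto.
pose A' (i : 'I_m.+1) := match unlift ord_max i with Some j => A j | None => x end.
exists A' => w'.
pose w := [set j | lift ord_max j \in w'].
have Hc : forall t, cell tst A' w' t <-> (cell tst A w t /\ (ord_max \in w' <-> tst x t)).
  move=> t; split.
  - move=> h; split; last by have := h ord_max; rewrite /A' unlift_none.
    by move=> j; rewrite inE; have := h (lift ord_max j); rewrite /A' liftK.
  - case=> h1 h2 i; case: (unliftP ord_max i) => [j|] ->.
    + by rewrite /A' liftK -h1 inE.
    + by rewrite /A' unlift_none.
have [h1 h2] := Hx (enum_rank w).
rewrite /S enum_rankK in h1 h2.
case E: (ord_max \in w').
- apply: pos_ext h1 => t; rewrite Hc E; split=> [[a b]|[a b]].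
  + by split=> //; split.
  + by split=> //; apply/b.
- apply: pos_ext h2 => t; rewrite Hc E; split=> [[a b]|[a b]].
  + by split=> //; split=> // /b.
  + by split=> // /b.
Qed.
Lemma pigeon nstar (Nl : 'I_nstar -> nat) N (tg : 'I_N -> 'I_nstar) :
  \sum_(l < nstar) Nl l < N -> exists l, Nl l <= #|[set j | tg j == l]|.
Proof.
move=> hN; apply NNPP => H.
have lt : forall l, #|[set j | tg j == l]| < Nl l.
  move=> l; rewrite ltnNge; apply/negP => h; apply H; exists l; exact h.
have : N <= \sum_(l < nstar) Nl l.
  rewrite -{1}(card_ord N) -sum1_card (partition_big tg predT) //=.
  apply: leq_sum => l _; apply: leq_trans (ltnW (lt l)).
  rewrite -sum1_card; apply: eq_leq; apply: eq_bigl => j; by rewrite inE.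
by rewrite leqNgt hN.
Qed.
Theorem claim8p1 (L : signature) (M : structure L) (hne : inhabited (dom M)) (hdep : dependent M)
  (Z : Type) (nstar : nat) (len : 'I_nstar -> nat)
  (phi : forall n : 'I_nstar, formula L (Z + 'I_(len n)))
  (I : Type) (D : (I -> Prop) -> Prop) (hD : proper_filter D)
  (a : I -> Z -> M) :
  exists (kstar : nat) (S : 'I_kstar -> I -> Prop),
    is_partition S /\
    (forall k, positive D (S k)) /\
    (forall (l : 'I_nstar) (b : 'I_(len l) -> M),
       exists (k : 'I_kstar) (tv : bool),
         eq_mod D
           (fun t => S k t /\
              (if tv then sat (phi l) (join (a t) b)
               else ~ sat (phi l) (join (a t) b)))
           (S k)).
Proof.
pose Tst := {l : 'I_nstar & 'I_(len l) -> M}.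
pose tst (x : Tst) (t : I) := sat (phi (tag x)) (join (a t) (tagged x)).
have Hgood : good_part D tst.
  apply NNPP => Hng.
  pose Nl l := proj1_sig (constructive_indefinite_description _ (nip_bound hne hdep (phi l))).
  have HN : forall l (b : 'I_(Nl l) -> 'I_(len l) -> M) (c : {set 'I_(Nl l)} -> Z -> M), ~ (forall i w, sat (phi l) (join (c w) (b i)) <-> i \in w)
    := fun l => proj2_sig (constructive_indefinite_description _ (nip_bound hne hdep (phi l))).
  have [A HA] := grow hD Hng (\sum_(l < nstar) Nl l).+1.
  have [l hl] := @pigeon nstar Nl _ (fun j => tag (A j)) (ltnSn _).
  pose X := [set j | tag (A j) == l].
  pose g (i : 'I_(Nl l)) : 'I_(\sum_(l < nstar) Nl l).+1 := enum_val (A:=X) (widen_ord hl i).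
  have ginj : injective g.
    by move=> i j /enum_val_inj /(congr1 val) /= /val_inj.
  have hg : forall i, tag (A (g i)) = l.
    by move=> i; have := enum_valP (A:=X) (widen_ord hl i); rewrite inE => /eqP.
  pose b i := eq_rect _ (fun l' => 'I_(len l') -> M) (tagged (A (g i))) l (hg i).
  have cast : forall (x : Tst) l' (h : tag x = l') e,
      sat (phi l') (join e (eq_rect _ (fun l' => 'I_(len l') -> M) (tagged x) l' h))
      <-> sat (phi (tag x)) (join e (tagged x)).
    by move=> x l' h e; destruct h.
  have ex : forall w : {set 'I_(Nl l)}, exists t, cell tst A [set g i | i in w] t.
    move=> w; case: (HA [set g i | i in w] (fun _ => True)) => [|t [ht _]].
      by case: hD.
    by exists t.
  pose c w := a (proj1_sig (constructive_indefinite_description _ (ex w))).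
  apply: (HN l b c) => i w.
  rewrite /b cast /c.
  case: constructive_indefinite_description => t /= ht.
  by rewrite -(mem_imset _ _ ginj); symmetry; apply ht.
case: Hgood => kstar [S [HP [Hpos Hx]]].
exists kstar, S; split => //; split => // l b.
case: (Hx (existT _ l b)) => k [hk|hk]; exists k.
- exists false.
  have [Y [hY hYd]] : exists Y, D Y /\ forall t, Y t -> ~ (S k t /\ tst (existT _ l b) t).
    apply NNPP => hn; apply hk => Y hY; apply NNPP => hn2; apply hn; exists Y; split => //.
    by move=> t hYt h; apply hn2; exists t.
  exists Y; split => // t hYt; split => [[]//|hS]; split => // hs; apply: (hYd t hYt); split => //.
- exists true.
  have [Y [hY hYd]] : exists Y, D Y /\ forall t, Y t -> ~ (S k t /\ ~ tst (existT _ l b) t).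
    apply NNPP => hn; apply hk => Y hY; apply NNPP => hn2; apply hn; exists Y; split => //.
    by move=> t hYt h; apply hn2; exists t.
  exists Y; split => // t hYt; split => [[]//|hS]; split => //; apply NNPP => hs; apply: (hYd t hYt); split => //.
Qed.
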